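(* Let $X$ be a Dedekind complete Riesz space and let $x,y,z\in X^{s}$ with $x\le y+z$. Then there exist $y_{1},z_{1}\in X^{s}$ such that $y_{1}\le y$, $z_{1}\le z$ and $x=y_{1}+z_{1}$. If in addition $x\in X$, then $y_{1},z_{1}$ can be taken in $X$.
   Context: For a Dedekind complete Riesz space $X$, its sup-completion $X^{s}$ is the set of classes of nonempty upward directed subsets of $X$ under $A\sim B$ iff $\sup_{a\in A}(x\wedge a)=\sup_{b\in B}(x\wedge b)$ for all $x\in X$, with the induced addition, nonnegative scalar multiplication and order; $X$ is identified with a subset of $X^{s}$ via $x\mapsto[\{x\}]$. It is a lattice-ordered cone in which every nonempty subset has a supremum. *)

(* Defs.v *)
From Stdlib Require Import Reals.
Open Scope R_scope.

Record RieszSpace := {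
  carrier :> Type;
  rzero : carrier;
  radd : carrier -> carrier -> carrier;
  ropp : carrier -> carrier;
  rscal : R -> carrier -> carrier;
  rle : carrier -> carrier -> Prop;
  rjoin : carrier -> carrier -> carrier;
  rmeet : carrier -> carrier -> carrier;
  raddA : forall x y z, radd x (radd y z) = radd (radd x y) z;
  raddC : forall x y, radd x y = radd y x;
  radd0 : forall x, radd rzero x = x;
  raddN : forall x, radd (ropp x) x = rzero;
  rscal1 : forall x, rscal 1 x = x;
  rscalA : forall a b x, rscal a (rscal b x) = rscal (a * b) x;
  rscalDl : forall a b x, rscal (a + b) x = radd (rscal a x) (rscal b x);
  rscalDr : forall a x y, rscal a (radd x y) = radd (rscal a x) (rscal a y);
  rle_refl : forall x, rle x x;
  rle_anti : forall x y, rle x y -> rle y x -> x = y;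
  rle_trans : forall x y z, rle x y -> rle y z -> rle x z;
  rle_add : forall x y z, rle x y -> rle (radd x z) (radd y z);
  rle_scal : forall a x y, 0 <= a -> rle x y -> rle (rscal a x) (rscal a y);
  rjoin_l : forall x y, rle x (rjoin x y);
  rjoin_r : forall x y, rle y (rjoin x y);
  rjoin_lub : forall x y z, rle x z -> rle y z -> rle (rjoin x y) z;
  rmeet_l : forall x y, rle (rmeet x y) x;
  rmeet_r : forall x y, rle (rmeet x y) y;
  rmeet_glb : forall x y z, rle z x -> rle z y -> rle z (rmeet x y)
}.

Section Riesz.
Variable X : RieszSpace.

Definition is_sup (S : X -> Prop) (s : X) : Prop :=
  (forall a, S a -> rle X a s) /\ (forall u, (forall a, S a -> rle X a u) -> rle X s u).

Definition dedekind_complete : Prop :=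
  forall S : X -> Prop, (exists a, S a) -> (exists u, forall a, S a -> rle X a u) ->
    exists s, is_sup S s.

(** Nonempty upward directed subsets: representatives of elements of X^s. *)
Definition updir (A : X -> Prop) : Prop :=
  (exists a, A a) /\
  forall a b, A a -> A b -> exists c, A c /\ rle X a c /\ rle X b c.

Definition meetset (x : X) (A : X -> Prop) : X -> Prop :=
  fun v => exists a, A a /\ v = rmeet X x a.

(** Order on X^s (on representatives): sup_a (x/\a) <= sup_b (x/\b) for all x in X.
    (These suprema exist in a Dedekind complete space.) *)
Definition sle (A B : X -> Prop) : Prop :=
  forall x s t, is_sup (meetset x A) s -> is_sup (meetset x B) t -> rle X s t.

(** The equivalence A ~ B defining X^s. *)
Definition sequiv (A B : X -> Prop) : Prop :=
  forall x s t, is_sup (meetset x A) s -> is_sup (meetset x B) t -> s = t.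

(** Induced addition [A] + [B] = [A + B]. *)
Definition sadd (A B : X -> Prop) : X -> Prop :=
  fun v => exists a b, A a /\ B b /\ v = radd X a b.

(** Embedding X -> X^s, x |-> [{x}]. *)
Definition ssingle (x : X) : X -> Prop := fun v => v = x.

End Riesz.

(* Main.v *)
Require Import Defs.
From Stdlib Require Import Reals.

Section Alg.
Variable X : RieszSpace.
Local Notation "a + b" := (radd X a b).
Local Notation "- a" := (ropp X a).
Local Notation "a - b" := (radd X a (ropp X b)).
Local Notation "a <= b" := (rle X a b).
Local Notation "a /\' b" := (rmeet X a b) (at level 40).
Local Notation "a \/' b" := (rjoin X a b) (at level 40).
Local Notation "0" := (rzero X).

Lemma addA a b c : a + (b + c) = (a + b) + c. Proof. apply raddA. Qed.
Lemma addC a b : a + b = b + a. Proof. apply raddC. Qed.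
Lemma add0r a : 0 + a = a. Proof. apply radd0. Qed.
Lemma addr0 a : a + 0 = a. Proof. rewrite addC; apply add0r. Qed.
Lemma addNr a : - a + a = 0. Proof. apply raddN. Qed.
Lemma addrN a : a - a = 0. Proof. rewrite addC; apply addNr. Qed.
Lemma addKr a b : - a + (a + b) = b. Proof. rewrite addA, addNr, add0r; auto. Qed.
Lemma addrK a b : (a + b) - b = a. Proof. rewrite <- addA, addrN, addr0; auto. Qed.
Lemma addrNK a b : (a - b) + b = a. Proof. rewrite <- addA, addNr, addr0; auto. Qed.
Lemma subK a b : a + (b - a) = b. Proof. rewrite addC; apply addrNK. Qed.

Lemma le_refl a : a <= a. Proof. apply rle_refl. Qed.
Lemma le_trans a b c : a <= b -> b <= c -> a <= c. Proof. apply rle_trans. Qed.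
Lemma le_anti a b : a <= b -> b <= a -> a = b. Proof. apply rle_anti. Qed.
Lemma le_addr a b c : a <= b -> a + c <= b + c. Proof. apply rle_add. Qed.
Lemma le_addl a b c : a <= b -> c + a <= c + b.
Proof. intro H; rewrite (addC c a), (addC c b); apply le_addr; auto. Qed.
Lemma le_addr_inv a b c : a + c <= b + c -> a <= b.
Proof. intro H. apply (le_addr _ _ (- c)) in H. rewrite !addrK in H. auto. Qed.
Lemma le_addl_inv a b c : c + a <= c + b -> a <= b.
Proof. rewrite (addC c a), (addC c b); apply le_addr_inv. Qed.
Lemma le_add a b c d : a <= b -> c <= d -> a + c <= b + d.
Proof. intros; apply le_trans with (b + c); [apply le_addr|apply le_addl]; auto. Qed.
Lemma le_subl a b c : a <= b + c -> a - c <= b.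
Proof. intro H. apply le_addr_inv with c. rewrite addrNK; auto. Qed.
Lemma le_subr a b c : a - c <= b -> a <= b + c.
Proof. intro H. apply (le_addr _ _ c) in H. rewrite addrNK in H; auto. Qed.
Lemma le_subr' a b c : a + c <= b -> a <= b - c.
Proof. intro H. apply le_addr_inv with c. rewrite addrNK; auto. Qed.
Lemma le_subr'_inv a b c : a <= b - c -> a + c <= b.
Proof. intro H. apply (le_addr _ _ c) in H. rewrite addrNK in H; auto. Qed.
Lemma le_sub2 r p q : p <= q -> r - q <= r - p.
Proof.
  intro H. apply le_addr_inv with p. apply le_trans with (r - q + q).
  apply le_addl; auto. rewrite !addrNK. apply le_refl.
Qed.

Lemma meet_l a b : a /\' b <= a. Proof. apply rmeet_l. Qed.
Lemma meet_r a b : a /\' b <= b. Proof. apply rmeet_r. Qed.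
Lemma meet_glb a b c : c <= a -> c <= b -> c <= a /\' b. Proof. apply rmeet_glb. Qed.
Lemma join_l a b : a <= a \/' b. Proof. apply rjoin_l. Qed.
Lemma join_r a b : b <= a \/' b. Proof. apply rjoin_r. Qed.
Lemma join_lub a b c : a <= c -> b <= c -> a \/' b <= c. Proof. apply rjoin_lub. Qed.
Lemma meet_mono a b c d : a <= b -> c <= d -> a /\' c <= b /\' d.
Proof. intros; apply meet_glb; [apply le_trans with a|apply le_trans with c]; auto using meet_l, meet_r. Qed.
Lemma join_mono a b c d : a <= b -> c <= d -> a \/' c <= b \/' d.
Proof. intros; apply join_lub; [apply le_trans with b|apply le_trans with d]; auto using join_l, join_r. Qed.

Lemma meet_transl p q r : p + (q /\' r) = (p + q) /\' (p + r).
Proof.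
  apply le_anti.
  - apply meet_glb; apply le_addl; [apply meet_l|apply meet_r].
  - apply le_addl_inv with (- p). rewrite addKr.
    apply meet_glb.
    + apply le_trans with (- p + (p + q)); [apply le_addl, meet_l|rewrite addKr; apply le_refl].
    + apply le_trans with (- p + (p + r)); [apply le_addl, meet_r|rewrite addKr; apply le_refl].
Qed.

Lemma meet_join p q : (p /\' q) + (p \/' q) = p + q.
Proof.
  apply le_anti.
  -
    assert (H : p \/' q <= (p + q) - (p /\' q)).
    { apply join_lub.
      - apply le_subr'. apply le_addl. apply meet_r.
      - apply le_subr'. rewrite (addC p q). apply le_addl. apply meet_l. }
    apply le_subr'_inv in H. rewrite addC. auto.
  - assert (H : (p + q) - (p \/' q) <= p /\' q).
    { apply meet_glb.
      - apply le_subl. apply le_addl. apply join_r.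
      - apply le_subl. rewrite (addC p q). apply le_addl. apply join_l. }
    apply le_subr in H. auto.
Qed.

Lemma distr (F : X -> Prop) s u t :
  is_sup X F s -> (forall f, F f -> u /\' f <= t) -> u /\' s <= t.
Proof.
  intros [Hub Hlub] Ht.
  assert (H1 : s <= (t + (u \/' s)) - u).
  { apply Hlub. intros f Hf. apply le_subr'.
    rewrite (addC f u), <- meet_join.
    apply le_add. apply Ht; auto. apply join_mono. apply le_refl. apply Hub; auto. }
  apply le_subr'_inv in H1. rewrite (addC s u), <- meet_join in H1.
  apply le_addr_inv in H1. auto.
Qed.

Lemma sup_unique F s t : is_sup X F s -> is_sup X F t -> s = t.
Proof. intros [H1 H2] [H3 H4]. apply le_anti; auto. Qed.


Lemma meetset_sup_ex (HX : dedekind_complete X) w A :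
  (exists a, A a) -> exists s, is_sup X (meetset X w A) s.
Proof.
  intros [a Ha]. apply HX.
  - exists (w /\' a). exists a; auto.
  - exists w. intros v [b [_ ->]]. apply meet_l.
Qed.

Lemma meet_id a : a /\' a = a.
Proof. apply le_anti. apply meet_l. apply meet_glb; apply le_refl. Qed.

Lemma sup_single w v : is_sup X (meetset X w (ssingle X v)) (w /\' v).
Proof.
  split.
  - intros u [b [Hb ->]]. unfold ssingle in Hb. subst. apply le_refl.
  - intros u Hu. apply Hu. exists v. split; reflexivity.
Qed.

Lemma single_le v B :
  (forall u T, is_sup X (meetset X u B) T -> u /\' v <= T) -> sle X (ssingle X v) B.
Proof.
  intros H u s T Hs HT. apply (proj2 Hs). intros e [b [Hb ->]].
  unfold ssingle in Hb; subst. eapply H; eauto.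
Qed.

Section Core.
Variable HX : dedekind_complete X.
Variables y z : X -> Prop.
Hypothesis Hy : updir X y.
Hypothesis Hz : updir X z.
Variable z0 : X.
Hypothesis Hz0 : z z0.

Definition ys a v := is_sup X (meetset X (a - z0) y) v.

Lemma ys_ex a : exists v, ys a v.
Proof. apply meetset_sup_ex; auto. apply Hy. Qed.

Lemma ys_le_y a ya : ys a ya -> forall u T, is_sup X (meetset X u y) T -> u /\' ya <= T.
Proof.
  intros Hya u T HT. apply (distr _ _ _ _ Hya).
  intros f [b [Hb ->]]. apply le_trans with (u /\' b).
  - apply meet_mono. apply le_refl. apply meet_r.
  - apply (proj1 HT). exists b; auto.
Qed.

Lemma zs_le_z a ya :
  (forall S, is_sup X (meetset X a (sadd X y z)) S -> a <= S) -> ys a ya ->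
  forall u T, is_sup X (meetset X u z) T -> u /\' (a - ya) <= T.
Proof.
  intros Ha Hya u T HT.
  destruct (meetset_sup_ex HX (a - ya) z) as [t Ht]. apply Hz.
  assert (Hc : a - ya <= t).
  { apply le_subl.
    destruct (meetset_sup_ex HX a (sadd X y z)) as [S HS].
    { destruct Hy as [[b Hb] _]. exists (b + z0). exists b, z0; auto. }
    apply le_trans with S. apply Ha; auto.
    apply (proj2 HS). intros e [v [[b [c [Hb [Hc ->]]]] ->]].
    destruct (proj2 Hz c z0 Hc Hz0) as [c' [Hc' [Hcc' Hzc']]].
    apply le_trans with (a /\' (b + c')).
    { apply meet_mono. apply le_refl. apply le_addl; auto. }
    apply le_trans with (ya + ((a - ya) /\' c')).
    - rewrite meet_transl, subK. apply meet_glb. apply meet_l.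
      assert (E : a /\' (b + c') = c' + ((a - c') /\' b)).
      { rewrite meet_transl, subK, addC. reflexivity. }
      rewrite E, (addC ya c'). apply le_addl.
      apply le_trans with ((a - z0) /\' b).
      + apply meet_mono. apply le_sub2; auto. apply le_refl.
      + apply (proj1 Hya). exists b; auto.
    - rewrite (addC t ya). apply le_addl. apply (proj1 Ht). exists c'; auto. }
  apply le_trans with (u /\' t).
  - apply meet_mono; auto using le_refl.
  - apply (distr _ _ _ _ Ht). intros f [c [Hc' ->]].
    apply le_trans with (u /\' c).
    + apply meet_mono. apply le_refl. apply meet_r.
    + apply (proj1 HT). exists c; auto.
Qed.

Lemma ys_mono a a' ya ya' : a <= a' -> ys a ya -> ys a' ya' -> ya <= ya'.
Proof.
  intros Haa H H'. apply (proj2 H). intros e [b [Hb ->]].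
  apply le_trans with ((a' - z0) /\' b).
  - apply meet_mono. apply le_addr; auto. apply le_refl.
  - apply (proj1 H'). exists b; auto.
Qed.

Lemma zs_mono a a' ya ya' : a <= a' -> ys a ya -> ys a' ya' -> a - ya <= a' - ya'.
Proof.
  intros Haa H H'.
  assert (K : ya' <= (a' - a) + ya).
  { apply (proj2 H'). intros e [b [Hb ->]].
    apply le_trans with ((a' - a) + ((a - z0) /\' b)).
    - rewrite meet_transl, addA, addrNK. apply meet_mono. apply le_refl.
      rewrite <- (add0r b) at 1. apply le_addr.
      rewrite <- (addrN a). apply le_addr; auto.
    - apply le_addl. apply (proj1 H). exists b; auto. }
  apply le_subr'. apply le_trans with ((a - ya) + ((a' - a) + ya)).
  - apply le_addl; auto.
  - rewrite (addC (a' - a) ya), addA, addrNK, subK. apply le_refl.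
Qed.

End Core.

End Alg.

Theorem mainTheorem11 (X : RieszSpace) (HX : dedekind_complete X)
  (x y z : X -> Prop) (Hx : updir X x) (Hy : updir X y) (Hz : updir X z) :
  sle X x (sadd X y z) ->
  (exists y1 z1 : X -> Prop, updir X y1 /\ updir X z1 /\
      sle X y1 y /\ sle X z1 z /\ sequiv X x (sadd X y1 z1)) /\
  ((exists x0 : X, sequiv X x (ssingle X x0)) ->
   exists y1 z1 : X, sle X (ssingle X y1) y /\ sle X (ssingle X z1) z /\
      sequiv X x (sadd X (ssingle X y1) (ssingle X z1))).
Proof.
  intros Hle. pose proof Hz as Hz'. destruct Hz' as [[z0 Hz0] Hzd].
  assert (Key : forall a, x a -> forall S, is_sup X (meetset X a (sadd X y z)) S -> rle X a S).
  { intros a Ha S HS. destruct (meetset_sup_ex X HX a x) as [s Hs]. exists a; auto.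
    apply rle_trans with s. 2: apply (Hle a s S Hs HS).
    rewrite <- (meet_id X a) at 1. apply (proj1 Hs). exists a; auto. }
  split.
  - exists (fun v => exists a, x a /\ ys X y z0 a v).
    exists (fun v => exists a ya, x a /\ ys X y z0 a ya /\ v = radd X a (ropp X ya)).
    split; [|split; [|split; [|split]]].
    + split.
      * destruct Hx as [[a Ha] _]. destruct (ys_ex X HX y Hy z0 a) as [v Hv]. eauto.
      * intros p q [a [Ha Hp]] [a' [Ha' Hq]].
        destruct (proj2 Hx a a' Ha Ha') as [c [Hc [H1 H2]]].
        destruct (ys_ex X HX y Hy z0 c) as [v Hv].
        exists v. split. eauto. split; [exact (ys_mono X y z0 _ _ _ _ H1 Hp Hv)|exact (ys_mono X y z0 _ _ _ _ H2 Hq Hv)].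
    + split.
      * destruct Hx as [[a Ha] _]. destruct (ys_ex X HX y Hy z0 a) as [v Hv]. exists (radd X a (ropp X v)), a, v; auto.
      * intros p q [a [ya [Ha [Hp ->]]]] [a' [ya' [Ha' [Hq ->]]]].
        destruct (proj2 Hx a a' Ha Ha') as [c [Hc [H1 H2]]].
        destruct (ys_ex X HX y Hy z0 c) as [v Hv].
        exists (radd X c (ropp X v)). split. exists c, v; auto. split; [exact (zs_mono X y z0 _ _ _ _ H1 Hp Hv)|exact (zs_mono X y z0 _ _ _ _ H2 Hq Hv)].
    + intros w s T Hs HT. apply (proj2 Hs). intros e [v [[a [Ha Hv]] ->]].
      eapply ys_le_y; eauto.
    + intros w s T Hs HT. apply (proj2 Hs). intros e [v [[a [ya [Ha [Hv ->]]]] ->]].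
      exact (zs_le_z X HX y z Hy Hz z0 Hz0 a ya (Key a Ha) Hv w T HT).
    + intros w s t Hs Ht. apply rle_anti.
      * apply (proj2 Hs). intros e [a [Ha ->]].
        destruct (ys_ex X HX y Hy z0 a) as [v Hv].
        apply (proj1 Ht). exists (radd X v (radd X a (ropp X v))).
        split. exists v, (radd X a (ropp X v)). split. eauto. split. eauto. reflexivity.
        rewrite subK. reflexivity.
      * apply (proj2 Ht). intros e [v [[p [q [[a [Ha Hp]] [[a' [ya' [Ha' [Hq ->]]]] ->]]]] ->]].
        destruct (proj2 Hx a a' Ha Ha') as [c [Hc [H1 H2]]].
        destruct (ys_ex X HX y Hy z0 c) as [yc Hyc].
        apply rle_trans with (rmeet X w c).
        -- apply meet_mono. apply le_refl. rewrite <- (subK X yc c).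
           apply le_add. exact (ys_mono X y z0 _ _ _ _ H1 Hp Hyc). exact (zs_mono X y z0 _ _ _ _ H2 Hq Hyc).
        -- apply (proj1 Hs). exists c; auto.
  - intros [x0 Hx0].
    assert (Kx0 : forall S, is_sup X (meetset X x0 (sadd X y z)) S -> rle X x0 S).
    { intros S HS. destruct (meetset_sup_ex X HX x0 x) as [s Hs]. apply Hx.
      pose proof (Hx0 x0 s _ Hs (sup_single X x0 x0)) as E. rewrite meet_id in E.
      subst s. apply (Hle x0 x0 S Hs HS). }
    destruct (ys_ex X HX y Hy z0 x0) as [y0 Hy0].
    exists y0, (radd X x0 (ropp X y0)). split; [|split].
    + apply single_le. eapply ys_le_y; eauto.
    + apply single_le. intros u T HT. exact (zs_le_z X HX y z Hy Hz z0 Hz0 x0 y0 Kx0 Hy0 u T HT).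
    + intros w s t Hs Ht.
      rewrite (Hx0 w s _ Hs (sup_single X w x0)).
      apply rle_anti.
      * apply (proj1 Ht). exists x0. split; [|reflexivity].
        exists y0, (radd X x0 (ropp X y0)). unfold ssingle. rewrite subK. auto.
      * apply (proj2 Ht). intros e [v [[p [q [Hp [Hq ->]]]] ->]].
        unfold ssingle in Hp, Hq. subst. rewrite subK. apply le_refl.
Qed.
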